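(* With the order on $\widehat{\mathbb{R}^{\mathcal{D}_0}}$ defined in the context, $\widehat{\mathbb{R}^{\mathcal{D}_0}}$ is a totally ordered field, and for $a\in\widehat{\mathbb{R}^{\mathcal{D}_0}}$ we have $a\ge0$ if and only if $a=b^2$ for some $b\in\widehat{\mathbb{R}^{\mathcal{D}_0}}$. Consequently the map $|\cdot|:\widehat{\mathbb{C}^{\mathcal{D}_0}}\to\widehat{\mathbb{R}^{\mathcal{D}_0}}$, $|a+ib|=\sqrt{a^2+b^2}$ ($a,b\in\widehat{\mathbb{R}^{\mathcal{D}_0}}$), is an absolute value on $\widehat{\mathbb{C}^{\mathcal{D}_0}}$.
   Context: Fix $d\in\mathbb{N}$, $\mathcal{D}_0=\mathcal{D}(\mathbb{R}^d)$. For $\varphi\in\mathcal{D}_0$ let $R_\varphi=\sup\{\|x\|:\varphi(x)\neq0\}$ if $\varphi\neq0$, $R_0=1$. For $n\in\mathbb{N}$, $\mathcal{D}_n$ is the set of $\varphi\in\mathcal{D}_0$ that are real-valued, even, with $R_\varphi\le1/n$, $\int\varphi=1$, $\int x^\alpha\varphi(x)dx=0$ for $1\le|\alpha|\le n$, $\int|\varphi|\le1+1/n$, and $\sup_x|\partial^\alpha\varphi(x)|\le R_\varphi^{-2(|\alpha|+d)}$ for $|\alpha|\le n$. $\mathcal{U}$ is a fixed free ultrafilter on $\mathcal{D}_0$ containing every $\mathcal{D}_n$ (and $\mathfrak c^+$-good, $\mathfrak c=\mathrm{card}\,\mathbb{R}$). ''$P(\varphi)$ a.e.'' means $\{\varphi:P(\varphi)\}\in\mathcal{U}$.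 $\mathcal{M}(\mathbb{C}^{\mathcal{D}_0})$: nets $(A_\varphi)\in\mathbb{C}^{\mathcal{D}_0}$ with $|A_\varphi|\le R_\varphi^{-m}$ a.e. for some $m\in\mathbb{N}$; $\mathcal{N}(\mathbb{C}^{\mathcal{D}_0})$: nets with $|A_\varphi|<R_\varphi^p$ a.e. for all $p\in\mathbb{N}$. $\widehat{\mathbb{C}^{\mathcal{D}_0}}=\mathcal{M}/\mathcal{N}$ (pointwise operations), $\widehat{A_\varphi}$ the class, $\widehat{\mathbb{R}^{\mathcal{D}_0}}$ the classes of real-valued moderate nets. Order: a nonzero $\widehat{A_\varphi}\in\widehat{\mathbb{R}^{\mathcal{D}_0}}$ satisfies $\widehat{A_\varphi}>0$ iff $A_\varphi>0$ a.e. *)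

(* Defs.v *)
From HB Require Import structures.
From mathcomp Require Import all_boot all_order all_algebra.
From mathcomp Require Import all_classical all_reals all_analysis.
From mathcomp Require Import complex.

Set Implicit Arguments.
Unset Strict Implicit.
Unset Printing Implicit Defensive.

Import Order.TTheory GRing.Theory Num.Theory.
Import numFieldNormedType.Exports.
Local Open Scope classical_set_scope.
Local Open Scope ring_scope.
Local Open Scope complex_scope.

Section TestFunctions.
Variables (R : realType) (d : nat).
Local Notation V := 'rV[R]_d.

Definition enorm (x : V) : R := Num.sqrt (\sum_(i < d) x ord0 i ^+ 2).

Definition unitv (i : 'I_d) : V := delta_mx ord0 i.

Definition pder (l : seq 'I_d) (f : V -> R) : V -> R :=
  foldr (fun i g => fun x => 'D_(unitv i) g x) f l.

Definition smooth (f : V -> R) : Prop :=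
  forall (l : seq 'I_d) (x : V), differentiable (pder l f) x.

Definition mlen (a : 'I_d -> nat) : nat := (\sum_(i < d) a i)%N.
Definition mono (a : 'I_d -> nat) (x : V) : R := \prod_(i < d) x ord0 i ^+ a i.
Definition pdera (a : 'I_d -> nat) (f : V -> R) : V -> R :=
  pder (flatten [seq nseq (a i) i | i <- enum 'I_d]) f.

(* test functions D(R^d): complex valued, smooth, compact (= bounded) support *)
Definition test_fun (f : V -> R[i]) : Prop :=
  [/\ smooth (fun x => complex.Re (f x)), smooth (fun x => complex.Im (f x)) &
      exists M : R, forall x, M < enorm x -> f x = 0].

Definition D0 := {f : V -> R[i] | test_fun f}.

Definition Rad (phi : D0) : R :=
  if pselect (exists x, sval phi x != 0)
  then sup [set enorm x | x in [set x | sval phi x != 0]]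
  else 1.

End TestFunctions.

(* Lebesgue integral over R^d, computed as an iterated integral
   (all integrands below are continuous with compact support, so this is
   the d-dimensional Lebesgue integral by Fubini). *)
Fixpoint iint (R : realType) (n : nat) : ('rV[R]_n -> R) -> R :=
  match n return ('rV[R]_n -> R) -> R with
  | 0 => fun f => f 0
  | n'.+1 => fun f =>
      Rintegral (@lebesgue_measure R) setT
        (fun t : R => @iint R n' (fun y => f (row_mx (\row_(_ < 1) t) y)))
  end.

Section Dn.
Variables (R : realType) (d : nat).
Local Notation V := 'rV[R]_d.

Definition Dn (n : nat) : set (D0 R d) :=
  [set phi | let f := fun x : V => complex.Re (sval phi x) in
    (forall x, complex.Im (sval phi x) = 0) /\
    (forall x, sval phi (- x) = sval phi x) /\
    Rad phi <= n%:R^-1 /\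
    iint f = 1 /\
    (forall a, (1 <= mlen a <= n)%N -> iint (fun x => mono a x * f x) = 0) /\
    iint (fun x => `|f x|) <= 1 + n%:R^-1 /\
    (forall a, (mlen a <= n)%N ->
       forall x, `|pdera a f x| <= Rad phi ^- (2 * (mlen a + d)))].

Definition free_ultrafilter (U : set (set (D0 R d))) : Prop :=
  U setT /\ ~ U set0 /\
  (forall A B, U A -> U B -> U (A `&` B)) /\
  (forall A B, A `<=` B -> U A -> U B) /\
  (forall A, U A \/ U (~` A)) /\
  (forall phi, ~ U [set phi]).

(* c^+-good (c = card R): for every cardinal mu <= c (realised as a subset S
   of R) and every monotone (decreasing) map F from finite subsets of S into U,
   there is a multiplicative G from finite subsets of S into U with G <= F. *)
Definition cplus_good (U : set (set (D0 R d))) : Prop :=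
  forall (S : set R) (F : set R -> set (D0 R d)),
    (forall s, finite_set s -> s `<=` S -> U (F s)) ->
    (forall s t, finite_set t -> t `<=` S -> s `<=` t -> F t `<=` F s) ->
    exists G : set R -> set (D0 R d),
      (forall s, finite_set s -> s `<=` S -> U (G s) /\ G s `<=` F s) /\
      (forall s t, finite_set s -> finite_set t -> s `<=` S -> t `<=` S ->
         G (s `|` t) = G s `&` G t).

Record adm_uf := AdmUF {
  UF :> set (set (D0 R d));
  UF_free : free_ultrafilter UF;
  UF_Dn : forall n, (0 < n)%N -> UF (Dn n);
  UF_good : cplus_good UF }.

End Dn.

Definition choose_or (T : Type) (x0 : T) (P : T -> Prop) : T :=
  match pselect (exists x, P x) with
  | left h => projT1 (cid h)
  | right _ => x0
  end.

Section Nets.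
Variables (R : realType) (d : nat) (U : adm_uf R d).
Local Notation D := (D0 R d).

Definition ae (P : D -> Prop) : Prop := UF U [set phi | P phi].

Definition moderateC (A : D -> R[i]) : Prop :=
  exists m : nat, ae (fun phi => `|A phi| <= (Rad phi ^- m)%:C).
Definition negligibleC (A : D -> R[i]) : Prop :=
  forall p : nat, ae (fun phi => `|A phi| < (Rad phi ^+ p)%:C).
Definition moderateR (A : D -> R) : Prop :=
  exists m : nat, ae (fun phi => `|A phi| <= Rad phi ^- m).
Definition negligibleR (A : D -> R) : Prop :=
  forall p : nat, ae (fun phi => `|A phi| < Rad phi ^+ p).

Definition clsC (A : D -> R[i]) : set (D -> R[i]) :=
  [set B | moderateC B /\ negligibleC (fun phi => A phi - B phi)].
Definition clsR (A : D -> R) : set (D -> R) :=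
  [set B | moderateR B /\ negligibleR (fun phi => A phi - B phi)].

Definition Chat := {C : set (D -> R[i]) | exists A, moderateC A /\ C = clsC A}.
Definition Rhat := {C : set (D -> R) | exists A, moderateR A /\ C = clsR A}.

Lemma ae_setT (P : D -> Prop) : (forall phi, P phi) -> ae P.
Proof.
move=> HP; rewrite /ae.
have -> : [set phi | P phi] = setT by apply/seteqP; split=> // x _; exact: HP.
by case: (UF_free U).
Qed.

Lemma moderateC0 : moderateC (fun _ => 0).
Proof. by exists 0%N; apply: ae_setT => phi; rewrite normr0 expr0 invr1. Qed.
Lemma moderateR0 : moderateR (fun _ => 0).
Proof. by exists 0%N; apply: ae_setT => phi; rewrite normr0 expr0 invr1. Qed.

Definition hzeroC : Chat :=
  exist _ (clsC (fun _ => 0)) (ex_intro _ _ (conj moderateC0 erefl)).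
Definition hzeroR : Rhat :=
  exist _ (clsR (fun _ => 0)) (ex_intro _ _ (conj moderateR0 erefl)).

(* class of a net (the class of 0 if the net is not moderate) *)
Definition hmkC (A : D -> R[i]) : Chat :=
  match pselect (moderateC A) with
  | left h => exist _ (clsC A) (ex_intro _ A (conj h erefl))
  | right _ => hzeroC
  end.
Definition hmkR (A : D -> R) : Rhat :=
  match pselect (moderateR A) with
  | left h => exist _ (clsR A) (ex_intro _ A (conj h erefl))
  | right _ => hzeroR
  end.

Definition hrepC (x : Chat) : D -> R[i] := projT1 (cid (proj2_sig x)).
Definition hrepR (x : Rhat) : D -> R := projT1 (cid (proj2_sig x)).

Definition honeR : Rhat := hmkR (fun _ => 1).
Definition haddR (x y : Rhat) : Rhat := hmkR (fun phi => hrepR x phi + hrepR y phi).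
Definition hoppR (x : Rhat) : Rhat := hmkR (fun phi => - hrepR x phi).
Definition hmulR (x y : Rhat) : Rhat := hmkR (fun phi => hrepR x phi * hrepR y phi).

Definition haddC (x y : Chat) : Chat := hmkC (fun phi => hrepC x phi + hrepC y phi).
Definition hmulC (x y : Chat) : Chat := hmkC (fun phi => hrepC x phi * hrepC y phi).
Definition hiC : Chat := hmkC (fun _ => 'i).
Definition hRtoC (x : Rhat) : Chat := hmkC (fun phi => (hrepR x phi)%:C).

Definition hposR (x : Rhat) : Prop :=
  x <> hzeroR /\ exists A, sval x A /\ ae (fun phi => 0 < A phi).
Definition hltR (x y : Rhat) : Prop := hposR (haddR y (hoppR x)).
Definition hleR (x y : Rhat) : Prop := x = y \/ hltR x y.

Definition hcabs (z : Chat) : Rhat :=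
  choose_or hzeroR (fun c => exists a b : Rhat,
     [/\ z = haddC (hRtoC a) (hmulC hiC (hRtoC b)),
         hleR hzeroR c & hmulR c c = haddR (hmulR a a) (hmulR b b)]).

End Nets.

(* Main.v *)
Require Import Defs.
From HB Require Import structures.
From mathcomp Require Import all_boot all_order all_algebra.
From mathcomp Require Import all_classical all_reals all_analysis.
From mathcomp Require Import complex.
From mathcomp Require Import ring lra.
Import Order.TTheory GRing.Theory Num.Theory.
Local Open Scope classical_set_scope.
Local Open Scope ring_scope.
Set Implicit Arguments.
Unset Strict Implicit.
Unset Printing Implicit Defensive.


Lemma no_uf0 (R : realType) (U : adm_uf R 0) : False.
Proof.
case: (UF_free U) => UT [U0 [UI [UM [UC Us]]]].
have H1 := UF_Dn U (ltn0Sn 0).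
have [phi0 Hphi0] : exists phi, Dn (R:=R) (d:=0) 1 phi.
  case: (pselect (exists phi, Dn (R:=R) (d:=0) 1 phi)) => // hne; exfalso.
  apply: U0; have <- : Dn (R:=R) (d:=0) 1 = set0 => //.
  by apply/seteqP; split => // x hx; apply: hne; exists x.
have val1 : forall phi : D0 R 0, Dn 1 phi -> forall x, sval phi x = 1.
  move=> phi [hIm [_ [_ [hint _]]]] x.
  rewrite (thinmx0 x); move: hint; rewrite /iint.
  move: (hIm 0); case: (sval phi 0) => a b /= -> ->; by [].
apply: (Us phi0); apply: (UM _ _ _ H1) => psi hpsi.
have := val1 _ hpsi; have := val1 _ Hphi0 => h0 h1.
rewrite /set1 /=; case: psi hpsi h1 => f hf /= _ h1.
case: phi0 Hphi0 h0 => g hg /= _ h0.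
have efg : f = g by apply/funext => x; rewrite h0 h1.
subst g; congr exist; exact: Prop_irrelevance.
Qed.

Lemma Rad_ge0 (R : realType) (d : nat) (phi : D0 R d) : 0 <= Rad phi.
Proof.
rewrite /Rad; destruct (pselect (exists x, sval phi x != 0)) as [hex|hne]; last exact: ler01.
case: hex => x hx.
case: (svalP phi) => _ _ [M hM].
have hs : has_sup [set enorm x | x in [set x | sval phi x != 0]].
  split; first by exists (enorm x), x.
  exists M => _ [y hy <-]; rewrite leNgt; apply/negP => /hM hy0.
  by move: hy; rewrite /= hy0 eqxx.
have hx' : [set enorm y | y in [set y : 'rV[R]_d | sval phi y != 0]] (enorm x) by exists x.
apply: le_trans (sup_upper_bound hs hx'); exact: sqrtr_ge0.
Qed.

Lemma Rad_gt0 (R : realType) (n : nat) (phi : D0 R n.+1) : Dn 1 phi -> 0 < Rad phi.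
Proof.
move=> [hIm [_ [_ [_ [_ [_ hder]]]]]].
rewrite lt_def Rad_ge0 andbT; apply/negP => /eqP h0.
move: (h0); rewrite /Rad.
destruct (pselect (exists x, sval phi x != 0)) as [hex|hne]; last by move=> /eqP; rewrite oner_eq0.
case: hex => x hx _.
have := hder (fun _ => 0%N) _ x.
have hm : mlen (fun _ : 'I_n.+1 => 0%N) = 0%N by rewrite /mlen big1.
rewrite hm => /(_ isT).
have -> : pdera (fun _ : 'I_n.+1 => 0%N) (fun x => complex.Re (sval phi x)) =
          (fun x => complex.Re (sval phi x)).
  by rewrite /pdera; elim: (enum _).
rewrite h0 add0n expr0n /= invr0 normr_le0 => /eqP hre.
move: hx (hIm x); case: (sval phi x) hre => a b /= -> hx hb.
by move: hx; rewrite hb eqxx.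
Qed.

Section Core.
Variables (R : realType) (d : nat) (U : adm_uf R d).
Local Notation D := (D0 R d).
Local Notation ae := (ae U).

Lemma uaeI (P Q : D -> Prop) : ae P -> ae Q -> ae (fun phi => P phi /\ Q phi).
Proof. case: (UF_free U) => _ [_ [UI _]]; exact: UI. Qed.

Lemma uaeW (P Q : D -> Prop) : (forall phi, P phi -> Q phi) -> ae P -> ae Q.
Proof. case: (UF_free U) => _ [_ [_ [UM _]]] h; exact: UM. Qed.

Lemma uae_false (P : D -> Prop) : (forall phi, ~ P phi) -> ~ ae P.
Proof.
case: (UF_free U) => _ [U0 _] h hP; apply: U0.
have <- : [set phi | P phi] = set0 by apply/seteqP; split => // x /h.
exact: hP.
Qed.

Lemma uae_em (P : D -> Prop) : ae P \/ ae (fun phi => ~ P phi).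
Proof. case: (UF_free U) => _ [_ [_ [_ [UC _]]]]; exact: UC. Qed.

Lemma uae_contra (P Q : D -> Prop) : ae P -> ae Q ->
  (forall phi, P phi -> Q phi -> False) -> False.
Proof.
move=> hP hQ h; apply: (@uae_false (fun phi => P phi /\ Q phi)); last exact: uaeI.
by move=> phi [hp hq]; exact: h hp hq.
Qed.

End Core.

Definition good (R : realType) (d : nat) (phi : D0 R d) := 0 < Rad phi /\ Rad phi <= 2^-1.

Lemma ae_good (R : realType) (d : nat) (U : adm_uf R d) : ae U (@good R d).
Proof.
case: d U => [|n] U'; first by case: (no_uf0 U').
apply: (@uaeW _ _ _ (fun phi => Dn 1 phi /\ Dn 2 phi)); last first.
  by apply: uaeI; apply: UF_Dn.
move=> phi [h1 h2]; split; first exact: Rad_gt0.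
by case: h2 => _ [_ [h _]].
Qed.

Section Num.
Variables (R : realType) (r : R).
Hypotheses (r0 : 0 < r) (r2 : r <= 2^-1).

Lemma r_le1 : r <= 1. Proof. apply: (le_trans r2); rewrite invf_le1 //; lra. Qed.
Lemma q_ge2 : 2 <= r^-1.
Proof.
rewrite -div1r ler_pdivlMr //; have := r2; lra.
Qed.
Lemma N1 p : 0 < r ^+ p. Proof. exact: exprn_gt0. Qed.
Lemma N2 p : 2 * r ^+ p.+1 <= r ^+ p.
Proof.
rewrite exprS mulrA; apply: ler_piMl; first exact: ltW (N1 p).
have := r2; lra.
Qed.
Lemma N6 m : 0 < r ^- m. Proof. by rewrite invr_gt0 N1. Qed.
Lemma N7 m : 1 <= r ^- m.
Proof. rewrite invf_ge1 ?N1 //; exact: exprn_ile1 (ltW r0) r_le1. Qed.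
Lemma N3 m : 2 * r ^- m <= r ^- m.+1.
Proof.
rewrite exprS invfM; apply: ler_pM => //; last exact: q_ge2.
exact: ltW (N6 m).
Qed.
Lemma N4 m k : r ^- m <= r ^- (m + k).
Proof.
rewrite exprD invfM -[X in X <= _]mulr1; apply: ler_pM => //; first exact: ltW (N6 m).
exact: N7.
Qed.
Lemma N5 p k : r ^+ (p + k) <= r ^+ p.
Proof.
rewrite exprD; apply: ler_piMr; first exact: ltW (N1 p).
exact: exprn_ile1 (ltW r0) r_le1.
Qed.
Lemma N8 p m : r ^+ (p + m) * r ^- m = r ^+ p.
Proof. by rewrite exprD mulfK // gt_eqF // N1. Qed.
End Num.

Section Sizes.
Variables (R : realType) (d : nat) (U : adm_uf R d).
Local Notation D := (D0 R d).
Local Notation ae := (ae U).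

Definition modr (s : D -> R) := exists m : nat, ae (fun phi => s phi <= Rad phi ^- m).
Definition negl (s : D -> R) := forall p : nat, ae (fun phi => s phi < Rad phi ^+ p).

Lemma uaeG (P : D -> Prop) : (forall phi, good phi -> P phi) -> ae P.
Proof. move=> h; exact: uaeW h (ae_good U). Qed.

Lemma uaeG2 (P Q : D -> Prop) : ae P -> (forall phi, good phi -> P phi -> Q phi) -> ae Q.
Proof. move=> hP h; apply: (uaeW _ (uaeI (ae_good U) hP)) => phi [] /h; apply. Qed.

Lemma uaeG3 (P P' Q : D -> Prop) : ae P -> ae P' ->
  (forall phi, good phi -> P phi -> P' phi -> Q phi) -> ae Q.
Proof.
move=> hP hP' h; apply: (uaeW _ (uaeI (ae_good U) (uaeI hP hP'))) => phi [g [a b]].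
exact: h.
Qed.

Lemma negl_le s t : ae (fun phi => s phi <= t phi) -> negl t -> negl s.
Proof. move=> hst ht p; apply: (uaeG3 hst (ht p)) => phi _; exact: le_lt_trans. Qed.

Lemma modr_le s t : ae (fun phi => s phi <= t phi) -> modr t -> modr s.
Proof.
move=> hst [m hm]; exists m; apply: (uaeG3 hst hm) => phi _; exact: le_trans.
Qed.

Lemma neglD s t : negl s -> negl t -> negl (fun phi => s phi + t phi).
Proof.
move=> hs ht p; apply: (uaeG3 (hs p.+1) (ht p.+1)) => phi [g1 g2] h1 h2.
have := N2 g1 g2 p; lra.
Qed.

Lemma modrD s t : modr s -> modr t -> modr (fun phi => s phi + t phi).
Proof.
move=> [m1 h1] [m2 h2]; exists (m1 + m2).+1.
apply: (uaeG3 h1 h2) => phi [g1 g2] a b.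
have := N3 g1 g2 (m1 + m2); have := N4 g1 g2 m1 m2; have := N4 g1 g2 m2 m1.
rewrite addnC; lra.
Qed.

Lemma modrM s t : (forall phi, 0 <= s phi) -> (forall phi, 0 <= t phi) ->
  modr s -> modr t -> modr (fun phi => s phi * t phi).
Proof.
move=> s0 t0 [m1 h1] [m2 h2]; exists (m1 + m2).
apply: (uaeG3 h1 h2) => phi [g1 g2] a b.
rewrite exprD invfM; exact: ler_pM.
Qed.

Lemma neglM s t : (forall phi, 0 <= s phi) -> (forall phi, 0 <= t phi) ->
  negl s -> modr t -> negl (fun phi => s phi * t phi).
Proof.
move=> s0 t0 hs [m hm] p; apply: (uaeG3 (hs (p + m)%N) hm) => phi [g1 g2] a b.
rewrite -(N8 g1 p m); apply: le_lt_trans (ler_wpM2l (s0 phi) b) _.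
by rewrite ltr_pM2r // N6.
Qed.

Lemma negl_modr s : negl s -> modr s.
Proof. move=> h; exists 0%N; apply: (uaeW _ (h 0%N)) => phi; rewrite expr0 invr1; exact: ltW. Qed.

Lemma negl0 : negl (fun _ => 0).
Proof. move=> p; apply: uaeG => phi [g1 g2]; exact: N1. Qed.

Lemma modr1 : modr (fun _ => 1).
Proof. by exists 0%N; apply: uaeG => phi _; rewrite expr0 invr1. Qed.

Lemma notnegl s : ~ negl s -> exists p, ae (fun phi => Rad phi ^+ p <= s phi).
Proof.
move=> h; apply: contrapT => h'; apply: h => p.
case: (uae_em U (fun phi => s phi < Rad phi ^+ p)) => // hn.
exfalso; apply: h'; exists p; apply: (uaeW _ hn) => phi; rewrite ltNge => /negP; by case: leP.
Qed.

Lemma ae_eq_negl s : ae (fun phi => s phi = 0) -> negl s.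
Proof. move=> h p; apply: (uaeG2 h) => phi [g1 g2] ->; exact: N1. Qed.

End Sizes.

Section RealNets.
Variables (R : realType) (d : nat) (U : adm_uf R d).
Local Notation D := (D0 R d).
Local Notation ae := (ae U).
Local Notation modR := (moderateR U).
Local Notation negR := (negligibleR U).

Definition eqv (A B : D -> R) := negR (fun phi => A phi - B phi).

Lemma modRD A B : modR A -> modR B -> modR (fun phi => A phi + B phi).
Proof.
move=> hA hB; apply: (modr_le (t := fun phi => `|A phi| + `|B phi|)); last exact: modrD.
by apply: uaeG => phi _; exact: ler_normD.
Qed.

Lemma modRN A : modR A -> modR (fun phi => - A phi).
Proof. by move=> [m hm]; exists m; apply: (uaeW _ hm) => phi; rewrite normrN. Qed.

Lemma modRM A B : modR A -> modR B -> modR (fun phi => A phi * B phi).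
Proof.
move=> hA hB; apply: (modr_le (t := fun phi => `|A phi| * `|B phi|)).
  by apply: uaeG => phi _; rewrite normrM.
by apply: modrM => // phi; exact: normr_ge0.
Qed.

Lemma modR1 : modR (fun _ => 1).
Proof. by apply: (modr_le _ (modr1 U)); apply: uaeG => phi _; rewrite normr1. Qed.

Lemma modR0 : modR (fun _ => 0).
Proof. by exists 0%N; apply: uaeG => phi _; rewrite normr0 expr0 invr1. Qed.

Lemma negRD A B : negR A -> negR B -> negR (fun phi => A phi + B phi).
Proof.
move=> hA hB; apply: (negl_le (t := fun phi => `|A phi| + `|B phi|)); last exact: neglD.
by apply: uaeG => phi _; exact: ler_normD.
Qed.

Lemma negRN A : negR A -> negR (fun phi => - A phi).
Proof. by move=> h p; apply: (uaeW _ (h p)) => phi; rewrite normrN. Qed.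

Lemma negRM A B : negR A -> modR B -> negR (fun phi => A phi * B phi).
Proof.
move=> hA hB; apply: (negl_le (t := fun phi => `|A phi| * `|B phi|)).
  by apply: uaeG => phi _; rewrite normrM.
by apply: neglM => // phi; exact: normr_ge0.
Qed.

Lemma negR_mod A : negR A -> modR A.
Proof. exact: negl_modr. Qed.

Lemma negR_ae A : ae (fun phi => A phi = 0) -> negR A.
Proof.
move=> h; apply: ae_eq_negl; apply: (uaeW _ h) => phi ->; by rewrite normr0.
Qed.

Lemma negR_ext A B : (forall phi, A phi = B phi) -> negR A -> negR B.
Proof. by move=> h; rewrite (funext h). Qed.

Lemma modR_ext A B : (forall phi, A phi = B phi) -> modR A -> modR B.
Proof. by move=> h; rewrite (funext h). Qed.

Lemma eqv_ae A B : ae (fun phi => A phi = B phi) -> eqv A B.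
Proof. move=> h; apply: negR_ae; apply: (uaeW _ h) => phi ->; exact: subrr. Qed.

Lemma eqv_refl A : eqv A A.
Proof. by apply: eqv_ae; apply: uaeG. Qed.

Lemma eqv_sym A B : eqv A B -> eqv B A.
Proof. move/negRN; apply: negR_ext => phi; by rewrite opprB. Qed.

Lemma eqv_trans A B C : eqv A B -> eqv B C -> eqv A C.
Proof. move=> h1 h2; apply: (negR_ext _ (negRD h1 h2)) => phi /=; ring. Qed.

Lemma eqvD A A' B B' : eqv A A' -> eqv B B' ->
  eqv (fun phi => A phi + B phi) (fun phi => A' phi + B' phi).
Proof. move=> h1 h2; apply: (negR_ext _ (negRD h1 h2)) => phi /=; ring. Qed.

Lemma eqvN A A' : eqv A A' -> eqv (fun phi => - A phi) (fun phi => - A' phi).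
Proof. move=> h1; apply: (negR_ext _ (negRN h1)) => phi /=; ring. Qed.

Lemma eqvM A A' B B' : modR A -> modR B' -> eqv A A' -> eqv B B' ->
  eqv (fun phi => A phi * B phi) (fun phi => A' phi * B' phi).
Proof.
move=> mA mB' h1 h2.
have := negRD (negRM h2 mA) (negRM h1 mB').
apply: negR_ext => phi /=; ring.
Qed.

Lemma eqv_mod A B : eqv A B -> modR B -> modR A.
Proof.
move=> h mB; apply: (modR_ext _ (modRD (negR_mod h) mB)) => phi /=; ring.
Qed.

Lemma Rhat_eq (x y : Rhat U) : sval x = sval y -> x = y.
Proof.
case: x => x hx; case: y => y hy /= exy; subst y; congr exist; exact: Prop_irrelevance.
Qed.

Lemma hmkR_val A : modR A -> sval (hmkR U A) = clsR U A.
Proof. by move=> hA; rewrite /hmkR; case: pselect. Qed.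

Lemma rep_spec (x : Rhat U) : modR (hrepR x) /\ sval x = clsR U (hrepR x).
Proof. rewrite /hrepR; case: (cid _) => A /= [hA ->]; by split. Qed.

Lemma clsR_self A : modR A -> clsR U A A.
Proof. by move=> hA; split => //; exact: eqv_refl. Qed.

Lemma clsR_eq A B : modR A -> modR B -> (clsR U A = clsR U B <-> eqv A B).
Proof.
move=> hA hB; split.
  move=> e; have : clsR U A B by rewrite e; exact: clsR_self.
  by case.
move=> h; apply/seteqP; split => C [hC hn]; split => //.
  exact: eqv_trans (eqv_sym h) hn.
exact: eqv_trans h hn.
Qed.

Lemma hmkR_eq A B : modR A -> modR B -> (hmkR U A = hmkR U B <-> eqv A B).
Proof.
move=> hA hB; rewrite -clsR_eq //; split.
  by move=> e; rewrite -hmkR_val // e hmkR_val.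
by move=> e; apply: Rhat_eq; rewrite !hmkR_val.
Qed.

Lemma hmkR_rep (x : Rhat U) : hmkR U (hrepR x) = x.
Proof. case: (rep_spec x) => hA e; apply: Rhat_eq; by rewrite hmkR_val. Qed.

Lemma rep_mod (x : Rhat U) : modR (hrepR x).
Proof. by case: (rep_spec x). Qed.

Lemma rep_hmkR A : modR A -> eqv (hrepR (hmkR U A)) A.
Proof.
move=> hA; rewrite -(clsR_eq (rep_mod _) hA).
by case: (rep_spec (hmkR U A)) => _ <-; rewrite hmkR_val.
Qed.

Lemma hR_ind (P : Rhat U -> Prop) : (forall A, modR A -> P (hmkR U A)) -> forall x, P x.
Proof. by move=> h x; rewrite -(hmkR_rep x); apply: h; exact: rep_mod. Qed.

Lemma hzeroE : hzeroR U = hmkR U (fun _ => 0).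
Proof. by apply: Rhat_eq; rewrite hmkR_val //; exact: modR0. Qed.

Lemma haddE A B : modR A -> modR B -> haddR (hmkR U A) (hmkR U B) = hmkR U (fun phi => A phi + B phi).
Proof.
move=> hA hB; rewrite /haddR hmkR_eq; first exact: eqvD (rep_hmkR hA) (rep_hmkR hB).
  exact: modRD (rep_mod _) (rep_mod _).
exact: modRD.
Qed.

Lemma hoppE A : modR A -> hoppR (hmkR U A) = hmkR U (fun phi => - A phi).
Proof.
move=> hA; rewrite /hoppR hmkR_eq; first exact: eqvN (rep_hmkR hA).
  exact: modRN (rep_mod _).
exact: modRN.
Qed.

Lemma hmulE A B : modR A -> modR B -> hmulR (hmkR U A) (hmkR U B) = hmkR U (fun phi => A phi * B phi).
Proof.
move=> hA hB; rewrite /hmulR hmkR_eq.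
- exact: eqvM (rep_mod _) hB (rep_hmkR hA) (rep_hmkR hB).
- exact: modRM (rep_mod _) (rep_mod _).
exact: modRM.
Qed.

Lemma hmkR_ext A B : (forall phi, A phi = B phi) -> hmkR U A = hmkR U B.
Proof. by move=> h; rewrite (funext h). Qed.

End RealNets.

Section RField.
Variables (R : realType) (d : nat) (U : adm_uf R d).
Local Notation D := (D0 R d).
Local Notation ae := (ae U).
Local Notation modR := (moderateR U).
Local Notation negR := (negligibleR U).

Definition RH := Rhat U.
HB.instance Definition _ := gen_eqMixin RH.
HB.instance Definition _ := gen_choiceMixin RH.

Lemma haddA : associative (@haddR R d U : RH -> RH -> RH).
Proof.
move=> x y z; elim/hR_ind: x => A hA; elim/hR_ind: y => B hB; elim/hR_ind: z => C hC.
rewrite !haddE //; try exact: modRD.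
by apply: hmkR_ext => phi; rewrite addrA.
Qed.

Lemma haddRC : commutative (@haddR R d U : RH -> RH -> RH).
Proof.
move=> x y; elim/hR_ind: x => A hA; elim/hR_ind: y => B hB.
by rewrite !haddE //; apply: hmkR_ext => phi; rewrite addrC.
Qed.

Lemma hadd0 : left_id (hzeroR U : RH) (@haddR R d U).
Proof.
move=> x; elim/hR_ind: x => A hA.
by rewrite hzeroE haddE //; [apply: hmkR_ext => phi; rewrite add0r | exact: modR0].
Qed.

Lemma haddN : left_inverse (hzeroR U : RH) (@hoppR R d U) (@haddR R d U).
Proof.
move=> x; elim/hR_ind: x => A hA.
rewrite hoppE // haddE //; last exact: modRN.
by rewrite hzeroE; apply: hmkR_ext => phi; rewrite addNr.
Qed.

HB.instance Definition _ := GRing.isZmodule.Build RH haddA haddRC hadd0 haddN.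

Lemma hmulA : associative (@hmulR R d U : RH -> RH -> RH).
Proof.
move=> x y z; elim/hR_ind: x => A hA; elim/hR_ind: y => B hB; elim/hR_ind: z => C hC.
rewrite !hmulE //; try exact: modRM.
by apply: hmkR_ext => phi; rewrite mulrA.
Qed.

Lemma hmulRC : commutative (@hmulR R d U : RH -> RH -> RH).
Proof.
move=> x y; elim/hR_ind: x => A hA; elim/hR_ind: y => B hB.
by rewrite !hmulE //; apply: hmkR_ext => phi; rewrite mulrC.
Qed.

Lemma hmul1 : left_id (honeR U : RH) (@hmulR R d U).
Proof.
move=> x; elim/hR_ind: x => A hA.
by rewrite /honeR hmulE //; [apply: hmkR_ext => phi; rewrite mul1r | exact: modR1].
Qed.

Lemma hmulDl : left_distributive (@hmulR R d U : RH -> RH -> RH) (@haddR R d U).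
Proof.
move=> x y z; elim/hR_ind: x => A hA; elim/hR_ind: y => B hB; elim/hR_ind: z => C hC.
rewrite haddE // hmulE //; last exact: modRD.
rewrite !hmulE // haddE //; try exact: modRM.
by apply: hmkR_ext => phi; rewrite mulrDl.
Qed.

Lemma hone_neq0 : (honeR U : RH) != hzeroR U.
Proof.
apply/eqP; rewrite hzeroE /honeR hmkR_eq; [|exact: modR1|exact: modR0].
move=> /(_ 0%N); apply: uae_false => phi; rewrite subr0 normr1 expr0; lra.
Qed.

HB.instance Definition _ := GRing.Zmodule_isComNzRing.Build RH hmulA hmulRC hmul1 hmulDl hone_neq0.

Definition hinvR (x : RH) : RH :=
  if pselect (x = hzeroR U) then hzeroR U else hmkR U (fun phi => (hrepR x phi)^-1).

Lemma hmkR0 A : modR A -> (hmkR U A = hzeroR U <-> negR A).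
Proof.
move=> hA; rewrite hzeroE hmkR_eq //; last exact: modR0.
by split; apply: negR_ext => phi; rewrite subr0.
Qed.

Lemma hmulVf (x : RH) : x != 0 -> hinvR x * x = 1.
Proof.
move=> /eqP hx; rewrite /hinvR; destruct (pselect (x = hzeroR U)) as [e|ne]; first by exfalso; exact: hx e.
change ((hmkR U (fun phi => (hrepR x phi)^-1) : RH) * x = 1).
have hA := rep_mod x; set A := hrepR x in hA *.
have nA : ~ negR A by move=> hn; apply: hx; rewrite -(hmkR_rep x) hmkR0.
case: (notnegl nA) => p hp.
have mAV : modR (fun phi => (A phi)^-1).
  exists p; apply: (uaeG2 hp) => phi [g1 g2] h.
  have hp0 := N1 g1 p.
  by rewrite normfV lef_pV2 ?posrE //; exact: lt_le_trans h.
rewrite -[X in _ * X](hmkR_rep x) -/A; change (hmulR (hmkR U (fun phi => (A phi)^-1)) (hmkR U A) = honeR U).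
rewrite hmulE // /honeR hmkR_eq //; [|exact: modRM|exact: modR1].
apply: eqv_ae; apply: (uaeG2 hp) => phi [g1 g2] h; rewrite mulVf //.
rewrite -normr_gt0; exact: lt_le_trans (N1 g1 p) h.
Qed.

Lemma hinv0 : hinvR 0 = 0.
Proof. by rewrite /hinvR; destruct (pselect ((0 : RH) = hzeroR U)) as [e|ne]. Qed.

HB.instance Definition _ := GRing.ComNzRing_isField.Build RH hmulVf hinv0.

End RField.

Section ROrder.
Variables (R : realType) (d : nat) (U : adm_uf R d).
Local Notation D := (D0 R d).
Local Notation ae := (ae U).
Local Notation modR := (moderateR U).
Local Notation negR := (negligibleR U).
Local Notation F := (RH U).

Definition bigpos (A : D -> R) := exists p : nat, ae (fun phi => Rad phi ^+ p <= A phi).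

Lemma ae_False (P : D -> Prop) : ae P -> (forall phi, good phi -> P phi -> False) -> False.
Proof.
move=> hP h; apply: (@uae_false _ _ U (fun _ => False)); first by move=> _ [].
exact: (uaeG2 (Q := fun _ => False) hP h).
Qed.

Lemma bigpos_negR A : bigpos A -> ~ negR A.
Proof.
move=> [p hp] hn; apply: (ae_False (uaeI hp (hn p))) => phi _ [a b].
have := ler_norm (A phi); lra.
Qed.

Lemma bigpos_opp A : bigpos A -> bigpos (fun phi => - A phi) -> False.
Proof.
move=> [p hp] [q hq]; apply: (ae_False (uaeI hp hq)) => phi [g1 g2] [a b].
have := N1 g1 p; have := N1 g1 q; lra.
Qed.

Lemma bigposD A B : bigpos A -> bigpos B -> bigpos (fun phi => A phi + B phi).
Proof.
move=> [p hp] [q hq]; exists (p + q)%N; apply: (uaeG3 hp hq) => phi [g1 g2] a b.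
have := N1 g1 q; have := N5 g1 g2 p q; lra.
Qed.

Lemma bigposM A B : bigpos A -> bigpos B -> bigpos (fun phi => A phi * B phi).
Proof.
move=> [p hp] [q hq]; exists (p + q)%N; apply: (uaeG3 hp hq) => phi [g1 g2] a b.
rewrite exprD; apply: ler_pM => //; exact: ltW (N1 g1 _).
Qed.

Lemma trich A : modR A -> negR A \/ bigpos A \/ bigpos (fun phi => - A phi).
Proof.
move=> hA; case: (pselect (negR A)) => [|nA]; first by left.
right; case: (notnegl nA) => p hp.
case: (uae_em U (fun phi => 0 <= A phi)) => h; [left|right]; exists p.
  by apply: (uaeG3 hp h) => phi _ a b; rewrite -(ger0_norm b).
apply: (uaeG3 hp h) => phi _ a b; rewrite -(ltr0_norm _) //.
by rewrite ltNge; apply/negP.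
Qed.

Lemma posE A : modR A -> hposR (hmkR U A) <-> bigpos A.
Proof.
move=> hA; split.
  move=> [hne [B [hB hBp]]].
  move: hB; rewrite hmkR_val // => -[mB nAB].
  have nA : ~ negR A by move=> hn; apply: hne; rewrite hmkR0.
  case: (notnegl nA) => p hp; exists p.
  apply: (uaeG3 hp (uaeI hBp (nAB p.+1))) => phi [g1 g2] h1 [h2 h3].
  have := N5 g1 g2 p 1; rewrite addn1 => h4.
  have [hA0|] := boolP (0 <= A phi); first by rewrite -(ger0_norm hA0).
  rewrite -ltNge => hA0.
  move: h1; rewrite (ltr0_norm hA0) => h1.
  have := ler_norm (B phi - A phi); rewrite distrC => h5.
  exfalso; clear -h1 h2 h3 h4 h5; lra.
move=> [p hp]; split.
  by move=> /hmkR0 => /(_ hA) hn; apply: (bigpos_negR (ex_intro _ p hp) hn).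
exists A; split; first by rewrite hmkR_val //; exact: clsR_self.
apply: (uaeG2 hp) => phi [g1 g2] h; exact: lt_le_trans (N1 g1 p) h.
Qed.

Lemma le0E (x : F) : hleR (hzeroR U) x <-> x = 0 \/ hposR x.
Proof.
rewrite /hleR /hltR.
have -> : haddR x (hoppR (hzeroR U)) = x by exact: (subr0 x).
by split => -[h|h]; [left; exact: esym h | right | left; exact: esym h | right].
Qed.

Lemma leE (x y : F) : hleR x y <-> x = y \/ hposR (y - x).
Proof. by []. Qed.

Lemma negpos (x : F) : hposR (- x) -> hposR x -> False.
Proof.
elim/hR_ind: x => A hA; change (hposR (hoppR (hmkR U A)) -> hposR (hmkR U A) -> False).
rewrite hoppE // !posE //; [exact: (fun a b => bigpos_opp b a) | exact: modRN].
Qed.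

Lemma pos0 : ~ hposR (0 : F).
Proof. by case. Qed.

Lemma posD (x y : F) : hposR x -> hposR y -> hposR (x + y).
Proof.
elim/hR_ind: x => A hA; elim/hR_ind: y => B hB.
change (hposR (hmkR U A) -> hposR (hmkR U B) -> hposR (haddR (hmkR U A) (hmkR U B))).
rewrite haddE // !posE //; [exact: bigposD | exact: modRD].
Qed.

Lemma posM (x y : F) : hposR x -> hposR y -> hposR (x * y).
Proof.
elim/hR_ind: x => A hA; elim/hR_ind: y => B hB.
change (hposR (hmkR U A) -> hposR (hmkR U B) -> hposR (hmulR (hmkR U A) (hmkR U B))).
rewrite hmulE // !posE //; [exact: bigposM | exact: modRM].
Qed.

Lemma postrich (x : F) : x = 0 \/ hposR x \/ hposR (- x).
Proof.
elim/hR_ind: x => A hA; change (hmkR U A = hzeroR U \/ hposR (hmkR U A) \/ hposR (hoppR (hmkR U A))).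
rewrite hoppE // !posE ?hmkR0 //; last exact: modRN.
exact: trich.
Qed.

Definition Rle (x y : F) : bool := `[< hleR x y >].
Definition Rlt (x y : F) : bool := `[< hltR x y >].
Definition Rnorm (x : F) : F := if Rle 0 x then x else - x.

Lemma Rle0 (x : F) : Rle 0 x <-> x = 0 \/ hposR x.
Proof. by rewrite /Rle asboolE le0E. Qed.

Lemma Rle0' (x : F) : Rle x 0 <-> x = 0 \/ hposR (- x).
Proof.
rewrite /Rle asboolE leE sub0r; by split => -[h|h]; [left|right|left|right].
Qed.

Lemma Rle_add (x y : F) : Rle 0 x -> Rle 0 y -> Rle 0 (x + y).
Proof.
rewrite !Rle0 => -[->|hx]; first by rewrite add0r.
case=> [->|hy]; first by rewrite addr0; right.
by right; exact: posD.
Qed.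

Lemma Rle_mul (x y : F) : Rle 0 x -> Rle 0 y -> Rle 0 (x * y).
Proof.
rewrite !Rle0 => -[->|hx]; first by rewrite mul0r; left.
case=> [->|hy]; first by rewrite mulr0; left.
by right; exact: posM.
Qed.

Lemma Rle_anti (x : F) : Rle 0 x -> Rle x 0 -> x = 0.
Proof.
rewrite Rle0 Rle0' => -[//|hx] [//|hnx]; case: (negpos hnx hx).
Qed.

Lemma Rsub_ge0 (x y : F) : Rle 0 (y - x) = Rle x y.
Proof.
apply/idP/idP.
  rewrite Rle0 /Rle asboolE leE => -[/eqP|h]; [rewrite subr_eq0 => /eqP ->; by left | by right].
rewrite Rle0 /Rle asboolE leE => -[->|h]; [by left; rewrite subrr | by right].
Qed.

Lemma Rle_total (x : F) : Rle 0 x || Rle x 0.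
Proof.
apply/orP; case: (postrich x) => [->|[h|h]].
- by left; rewrite Rle0; left.
- by left; rewrite Rle0; right.
by right; rewrite Rle0'; right.
Qed.

Lemma RnormN (x : F) : Rnorm (- x) = Rnorm x.
Proof.
rewrite /Rnorm.
have e : Rle 0 (- x) = Rle x 0 by rewrite -[RHS]Rsub_ge0 sub0r.
rewrite e; case hx: (Rle 0 x); case hx': (Rle x 0) => //.
- by rewrite (Rle_anti hx hx') oppr0.
- by rewrite opprK.
by move: (Rle_total x); rewrite hx hx'.
Qed.

Lemma Rge0_norm (x : F) : Rle 0 x -> Rnorm x = x.
Proof. by rewrite /Rnorm => ->. Qed.

Lemma Rlt_def (x y : F) : Rlt x y = (y != x) && Rle x y.
Proof.
apply/idP/idP.
  rewrite /Rlt asboolE => h; apply/andP; split.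
    apply/eqP => e; move: h; rewrite /hltR e; change (hposR (x - x : F) -> False).
    by rewrite subrr; exact: pos0.
  by rewrite /Rle asboolE; right.
move=> /andP [/eqP hne]; rewrite /Rle /Rlt !asboolE => -[e|//].
by case: hne.
Qed.

HB.instance Definition _ := Num.IntegralDomain_isLeReal.Build F
  Rle_add Rle_mul Rle_anti Rsub_ge0 Rle_total RnormN Rge0_norm Rlt_def.



End ROrder.

Section CNorm.
Variable (R : realType).
Definition nC (z : R[i]) : R := Normc.normc z.

Lemma nC_ge0 z : 0 <= nC z.
Proof. by case: z => a b; exact: sqrtr_ge0. Qed.
Lemma nC_add z w : nC (z + w) <= nC z + nC w.
Proof. exact: le_normcD. Qed.
Lemma nC_mul z w : nC (z * w) = nC z * nC w.
Proof. exact: Normc.normcM. Qed.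
Lemma nC_opp z : nC (- z) = nC z.
Proof. exact: normcN. Qed.
Lemma nC_real (a : R) : nC (a%:C)%C = `|a|.
Proof. by rewrite /nC /= expr0n /= addr0 sqrtr_sqr. Qed.
Lemma nC_realB (a b : R) : nC ((a%:C)%C - (b%:C)%C) = `|a - b|.
Proof. by rewrite /nC /= subr0 expr0n /= addr0 sqrtr_sqr. Qed.
Lemma nC_i : nC 'i%C = 1.
Proof. by rewrite /nC /= expr0n /= add0r expr1n sqrtr1. Qed.
Lemma nC_Re z : `|complex.Re z| <= nC z.
Proof.
case: z => a b; rewrite /nC /= -sqrtr_sqr ler_sqrt ?addr_ge0 ?sqr_ge0 //.
by rewrite lerDl sqr_ge0.
Qed.
Lemma nC_Im z : `|complex.Im z| <= nC z.
Proof.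
case: z => a b; rewrite /nC /= -sqrtr_sqr ler_sqrt ?addr_ge0 ?sqr_ge0 //.
by rewrite lerDr sqr_ge0.
Qed.
Lemma nC_diff z w : `|nC z - nC w| <= nC (z - w).
Proof.
have h1 := nC_add (z - w) w; have h2 := nC_add (w - z) z.
rewrite subrK in h1; rewrite subrK in h2.
have e : nC (w - z) = nC (z - w) by rewrite -nC_opp opprB.
rewrite e in h2; rewrite ler_norml; apply/andP; split; lra.
Qed.
Lemma nC_le (z : R[i]) (x : R) : (`|z| <= (x%:C)%C) = (nC z <= x).
Proof. exact: lecR. Qed.
Lemma nC_lt (z : R[i]) (x : R) : (`|z| < (x%:C)%C) = (nC z < x).
Proof. exact: ltcR. Qed.
End CNorm.

Section ComplexNets.
Variables (R : realType) (d : nat) (U : adm_uf R d).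
Local Notation D := (D0 R d).
Local Notation ae := (ae U).
Local Notation modR := (moderateR U).
Local Notation negR := (negligibleR U).
Local Notation modC := (moderateC U).
Local Notation negC := (negligibleC U).

Lemma modC_iff A : modC A <-> modr U (fun phi => nC (A phi)).
Proof.
by split => -[m hm]; exists m; apply: (uaeW _ hm) => phi; rewrite nC_le.
Qed.

Lemma negC_iff A : negC A <-> negl U (fun phi => nC (A phi)).
Proof.
by split => h p; apply: (uaeW _ (h p)) => phi; rewrite nC_lt.
Qed.

Definition eqvC (A B : D -> R[i]) := negC (fun phi => A phi - B phi).

Lemma modCD A B : modC A -> modC B -> modC (fun phi => A phi + B phi).
Proof.
rewrite !modC_iff => hA hB; apply: (modr_le (t := fun phi => nC (A phi) + nC (B phi))); last exact: modrD.
by apply: uaeG => phi _; exact: nC_add.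
Qed.

Lemma modCM A B : modC A -> modC B -> modC (fun phi => A phi * B phi).
Proof.
rewrite !modC_iff => hA hB; apply: (modr_le (t := fun phi => nC (A phi) * nC (B phi))).
  by apply: uaeG => phi _; rewrite nC_mul.
by apply: modrM => // phi; exact: nC_ge0.
Qed.

Lemma modC_R A : modR A -> modC (fun phi => (A phi)%:C%C).
Proof. by move=> [m hm]; rewrite modC_iff; exists m; apply: (uaeW _ hm) => phi; rewrite nC_real. Qed.

Lemma modCi : modC (fun _ => 'i%C).
Proof. rewrite modC_iff; apply: (modr_le _ (modr1 U)); by apply: uaeG => phi _; rewrite nC_i. Qed.

Lemma modC0 : modC (fun _ => 0).
Proof. rewrite modC_iff; exists 0%N; apply: uaeG => phi _; by rewrite /nC /= expr0n /= addr0 sqrtr0 expr0 invr1. Qed.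

Lemma negCD A B : negC A -> negC B -> negC (fun phi => A phi + B phi).
Proof.
rewrite !negC_iff => hA hB; apply: (negl_le (t := fun phi => nC (A phi) + nC (B phi))); last exact: neglD.
by apply: uaeG => phi _; exact: nC_add.
Qed.

Lemma negCN A : negC A -> negC (fun phi => - A phi).
Proof. rewrite !negC_iff => h p; apply: (uaeW _ (h p)) => phi; by rewrite nC_opp. Qed.

Lemma negCM A B : negC A -> modC B -> negC (fun phi => A phi * B phi).
Proof.
rewrite !negC_iff modC_iff => hA hB; apply: (negl_le (t := fun phi => nC (A phi) * nC (B phi))).
  by apply: uaeG => phi _; rewrite nC_mul.
by apply: neglM => // phi; exact: nC_ge0.
Qed.

Lemma negC_mod A : negC A -> modC A.
Proof. rewrite negC_iff modC_iff; exact: negl_modr. Qed.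

Lemma negC_ext A B : (forall phi, A phi = B phi) -> negC A -> negC B.
Proof. by move=> h; rewrite (funext h). Qed.

Lemma modC_ext A B : (forall phi, A phi = B phi) -> modC A -> modC B.
Proof. by move=> h; rewrite (funext h). Qed.

Lemma eqvC_ae A B : ae (fun phi => A phi = B phi) -> eqvC A B.
Proof.
move=> h; rewrite /eqvC negC_iff; apply: ae_eq_negl; apply: (uaeW _ h) => phi ->.
by rewrite subrr /nC /= expr0n /= addr0 sqrtr0.
Qed.

Lemma eqvC_refl A : eqvC A A.
Proof. by apply: eqvC_ae; apply: uaeG. Qed.

Lemma eqvC_sym A B : eqvC A B -> eqvC B A.
Proof. move/negCN; apply: negC_ext => phi; by rewrite opprB. Qed.

Lemma eqvC_trans A B C : eqvC A B -> eqvC B C -> eqvC A C.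
Proof. move=> h1 h2; apply: (negC_ext _ (negCD h1 h2)) => phi /=; ring. Qed.

Lemma eqvCD A A' B B' : eqvC A A' -> eqvC B B' ->
  eqvC (fun phi => A phi + B phi) (fun phi => A' phi + B' phi).
Proof. move=> h1 h2; apply: (negC_ext _ (negCD h1 h2)) => phi /=; ring. Qed.

Lemma eqvCM A A' B B' : modC A -> modC B' -> eqvC A A' -> eqvC B B' ->
  eqvC (fun phi => A phi * B phi) (fun phi => A' phi * B' phi).
Proof.
move=> mA mB' h1 h2.
have := negCD (negCM h2 mA) (negCM h1 mB').
apply: negC_ext => phi /=; ring.
Qed.

Lemma eqvC_R A B : eqv U A B -> eqvC (fun phi => (A phi)%:C%C) (fun phi => (B phi)%:C%C).
Proof.
move=> h; rewrite /eqvC negC_iff => p; apply: (uaeW _ (h p)) => phi; by rewrite nC_realB.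
Qed.

Lemma eqvC_norm A B : eqvC A B -> eqv U (fun phi => nC (A phi)) (fun phi => nC (B phi)).
Proof.
rewrite /eqvC negC_iff => h; apply: (negl_le _ h); apply: uaeG => phi _; exact: nC_diff.
Qed.

Lemma modC_norm A : modC A -> modR (fun phi => nC (A phi)).
Proof.
rewrite modC_iff => -[m hm]; exists m; apply: (uaeW _ hm) => phi; by rewrite ger0_norm // nC_ge0.
Qed.

Lemma Chat_eq (x y : Chat U) : sval x = sval y -> x = y.
Proof.
case: x => x hx; case: y => y hy /= exy; subst y; congr exist; exact: Prop_irrelevance.
Qed.

Lemma hmkC_val A : modC A -> sval (hmkC U A) = clsC U A.
Proof. by move=> hA; rewrite /hmkC; case: pselect. Qed.

Lemma repC_spec (x : Chat U) : modC (hrepC x) /\ sval x = clsC U (hrepC x).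
Proof. rewrite /hrepC; case: (cid _) => A /= [hA ->]; by split. Qed.

Lemma clsC_self A : modC A -> clsC U A A.
Proof. by move=> hA; split => //; exact: eqvC_refl. Qed.

Lemma clsC_eq A B : modC A -> modC B -> (clsC U A = clsC U B <-> eqvC A B).
Proof.
move=> hA hB; split.
  move=> e; have : clsC U A B by rewrite e; exact: clsC_self.
  by case.
move=> h; apply/seteqP; split => C [hC hn]; split => //.
  exact: eqvC_trans (eqvC_sym h) hn.
exact: eqvC_trans h hn.
Qed.

Lemma hmkC_eq A B : modC A -> modC B -> (hmkC U A = hmkC U B <-> eqvC A B).
Proof.
move=> hA hB; rewrite -clsC_eq //; split.
  by move=> e; rewrite -hmkC_val // e hmkC_val.
by move=> e; apply: Chat_eq; rewrite !hmkC_val.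
Qed.

Lemma hmkC_rep (x : Chat U) : hmkC U (hrepC x) = x.
Proof. case: (repC_spec x) => hA e; apply: Chat_eq; by rewrite hmkC_val. Qed.

Lemma repC_mod (x : Chat U) : modC (hrepC x).
Proof. by case: (repC_spec x). Qed.

Lemma repC_hmkC A : modC A -> eqvC (hrepC (hmkC U A)) A.
Proof.
move=> hA; rewrite -(clsC_eq (repC_mod _) hA).
by case: (repC_spec (hmkC U A)) => _ <-; rewrite hmkC_val.
Qed.

Lemma hzeroCE : hzeroC U = hmkC U (fun _ => 0).
Proof. by apply: Chat_eq; rewrite hmkC_val //; exact: modC0. Qed.

Lemma haddCE A B : modC A -> modC B -> haddC (hmkC U A) (hmkC U B) = hmkC U (fun phi => A phi + B phi).
Proof.
move=> hA hB; rewrite /haddC hmkC_eq; first exact: eqvCD (repC_hmkC hA) (repC_hmkC hB).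
  exact: modCD (repC_mod _) (repC_mod _).
exact: modCD.
Qed.

Lemma hmulCE A B : modC A -> modC B -> hmulC (hmkC U A) (hmkC U B) = hmkC U (fun phi => A phi * B phi).
Proof.
move=> hA hB; rewrite /hmulC hmkC_eq.
- exact: eqvCM (repC_mod _) hB (repC_hmkC hA) (repC_hmkC hB).
- exact: modCM (repC_mod _) (repC_mod _).
exact: modCM.
Qed.

Lemma hRtoCE A : modR A -> hRtoC (hmkR U A) = hmkC U (fun phi => (A phi)%:C%C).
Proof.
move=> hA; rewrite /hRtoC hmkC_eq; first exact: eqvC_R (rep_hmkR hA).
  exact: modC_R (rep_mod _).
exact: modC_R.
Qed.

Lemma hmkC_ext A B : (forall phi, A phi = B phi) -> hmkC U A = hmkC U B.
Proof. by move=> h; rewrite (funext h). Qed.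

End ComplexNets.

Section Final.
Variables (R : realType) (d : nat) (U : adm_uf R d).
Local Notation D := (D0 R d).
Local Notation ae := (ae U).
Local Notation modR := (moderateR U).
Local Notation negR := (negligibleR U).
Local Notation modC := (moderateC U).
Local Notation F := (RH U).

Lemma hleE (x y : F) : hleR x y <-> x <= y.
Proof. by split => h; [apply/asboolP | move/asboolP: h]. Qed.

Lemma ge0_ae A : modR A -> ae (fun phi => 0 <= A phi) -> (0 : F) <= hmkR U A.
Proof.
move=> hA h0; apply/hleE; apply/le0E.
case: (trich hA) => [hn|[hp|hp]].
- by left; apply/(hmkR0 hA).
- by right; apply/(posE hA).
exfalso; case: hp => p hp; apply: (ae_False (uaeI hp h0)) => phi [g1 _] [a b].
have := N1 g1 p; lra.
Qed.

Lemma hsubE A B : modR A -> modR B ->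
  hmkR U (fun phi => B phi - A phi) = (hmkR U B : F) - (hmkR U A : F).
Proof.
move=> hA hB; change (hmkR U (fun phi => B phi - A phi) = haddR (hmkR U B) (hoppR (hmkR U A))).
by rewrite hoppE // haddE //; exact: modRN.
Qed.

Lemma le_ae A B : modR A -> modR B -> ae (fun phi => A phi <= B phi) ->
  (hmkR U A : F) <= (hmkR U B : F).
Proof.
move=> hA hB h; rewrite -subr_ge0 -hsubE //; apply: ge0_ae.
  exact: modRD hB (modRN hA).
by apply: (uaeW _ h) => phi; rewrite subr_ge0.
Qed.

Lemma sqrt_le (y : R) : Num.sqrt y <= 1 + `|y|.
Proof.
have [hy|hy] := boolP (0 <= y); last first.
  rewrite ltr0_sqrtr ?ltNge //; exact: addr_ge0 ler01 (normr_ge0 _).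
rewrite ger0_norm //; have := sqr_sqrtr hy; have := sqrtr_ge0 y.
set s := Num.sqrt y => hs e; rewrite -e; nra.
Qed.

Lemma sq_exists (a : F) : 0 <= a -> exists b : F, a = b * b.
Proof.
move=> /hleE /le0E [->|]; first by exists 0; rewrite mulr0.
elim/hR_ind: a => A hA /posE -/(_ hA) [p hp].
have mS : modR (fun phi => Num.sqrt (A phi)).
  apply: (modr_le (t := fun phi => 1 + `|A phi|)); last exact: modrD (modr1 U) hA.
  apply: uaeG => phi _; rewrite ger0_norm ?sqrtr_ge0 //; exact: sqrt_le.
exists (hmkR U (fun phi => Num.sqrt (A phi))).
change (hmkR U A = hmulR (hmkR U (fun phi => Num.sqrt (A phi))) (hmkR U (fun phi => Num.sqrt (A phi)))).
rewrite hmulE // hmkR_eq //; last exact: modRM.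
apply: eqv_ae; apply: (uaeG2 hp) => phi [g1 _] h.
rewrite -expr2 sqr_sqrtr //; exact: le_trans (ltW (N1 g1 p)) h.
Qed.

Definition Nz (z : Chat U) : F := hmkR U (fun phi => nC (hrepC z phi)).

Lemma Nz_ge0 z : 0 <= Nz z.
Proof.
apply: ge0_ae; first exact: modC_norm (repC_mod _).
by apply: uaeG => phi _; exact: nC_ge0.
Qed.

Lemma N_hmkC A : modC A -> Nz (hmkC U A) = hmkR U (fun phi => nC (A phi)).
Proof.
move=> hA; rewrite /Nz hmkR_eq; first exact: eqvC_norm (repC_hmkC hA).
  exact: modC_norm (repC_mod _).
exact: modC_norm.
Qed.

Lemma nC_W (a b : R) : nC ((a%:C)%C + 'i%C * (b%:C)%C) = Num.sqrt (a ^+ 2 + b ^+ 2).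
Proof.
have -> : ((a%:C)%C + 'i%C * (b%:C)%C) = (a +i* b)%C by rewrite [RHS]complexE.
by [].
Qed.

Lemma nC_sq (z : R[i]) : nC z * nC z = complex.Re z * complex.Re z + complex.Im z * complex.Im z.
Proof.
by case: z => x y; rewrite /nC /= -expr2 sqr_sqrtr ?addr_ge0 ?sqr_ge0 // !expr2.
Qed.

Lemma sq_inj (c s : F) : 0 <= c -> 0 <= s -> c * c = s * s -> c = s.
Proof. move=> hc hs e; apply/eqP; rewrite eq_le; apply/andP; split; nra. Qed.

Definition Pc (z : Chat U) (c : Rhat U) := exists a b : Rhat U,
  [/\ z = haddC (hRtoC a) (hmulC (hiC U) (hRtoC b)),
      hleR (hzeroR U) c & hmulR c c = haddR (hmulR a a) (hmulR b b)].

Lemma Pc_ex z : Pc z (Nz z).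
Proof.
have hZ := repC_mod z; set Z := hrepC z in hZ *.
have mN := modC_norm hZ.
have mRe : modR (fun phi => complex.Re (Z phi)).
  apply: (modr_le _ mN); apply: uaeG => phi _; rewrite [X in _ <= X]ger0_norm ?nC_ge0 //; exact: nC_Re.
have mIm : modR (fun phi => complex.Im (Z phi)).
  apply: (modr_le _ mN); apply: uaeG => phi _; rewrite [X in _ <= X]ger0_norm ?nC_ge0 //; exact: nC_Im.
exists (hmkR U (fun phi => complex.Re (Z phi))), (hmkR U (fun phi => complex.Im (Z phi))); split.
- have m1 := modC_R mRe; have m2 := modC_R mIm; have mi := @modCi _ _ U.
  rewrite !hRtoCE // /hiC hmulCE // haddCE //; last exact: modCM.
  rewrite -{1}(hmkC_rep z) -/Z; apply: hmkC_ext => phi; exact: complexE.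
- exact/hleE/Nz_ge0.
rewrite /Nz -/Z !hmulE // haddE //; try exact: modRM.
by apply: hmkR_ext => phi; rewrite nC_sq.
Qed.

Lemma Pc_uniq z c : Pc z c -> c = Nz z.
Proof.
move=> [a [b [hz /hleE hc hcc]]].
move: hz hcc; rewrite -(hmkR_rep a) -(hmkR_rep b).
have hA := rep_mod a; have hB := rep_mod b.
set A := hrepR a in hA *; set B := hrepR b in hB *.
have m1 := modC_R hA; have m2 := modC_R hB; have mi := @modCi _ _ U.
rewrite !hRtoCE // /hiC hmulCE // haddCE //; last exact: modCM.
set W := fun phi => _ => hz.
have mW : modC W by apply: modCD => //; exact: modCM.
have eN : Nz z = hmkR U (fun phi => nC (W phi)) by rewrite hz N_hmkC.
rewrite !hmulE // haddE //; try exact: modRM.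
move=> hcc; apply: sq_inj => //; first exact: Nz_ge0.
change (hmulR c c = hmulR (Nz z) (Nz z)); rewrite hcc eN hmulE; try exact: modC_norm.
by apply: hmkR_ext => phi; rewrite /W nC_W -[RHS]expr2 sqr_sqrtr ?addr_ge0 ?sqr_ge0 // !expr2.
Qed.

Lemma hcabsE z : hcabs z = Nz z.
Proof.
rewrite /hcabs /choose_or; case: (pselect _) => [h|h]; last first.
  by exfalso; apply: h; exists (Nz z); exact: Pc_ex.
case: (cid h) => c hc /=; exact: Pc_uniq hc.
Qed.

End Final.

Unset Implicit Arguments.
Local Close Scope classical_set_scope.

Theorem corollary4p3 (R : realType) (d : nat) (U : adm_uf R d) :
  (exists (F : realFieldType) (f : Rhat U -> F),
      [/\ bijective f, f (hzeroR U) = 0, f (honeR U) = 1,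
          (forall x y, f (haddR x y) = f x + f y) &
          (forall x y, f (hmulR x y) = f x * f y) /\
          (forall x y, hleR x y <-> f x <= f y)]) /\
  (forall a : Rhat U, hleR (hzeroR U) a <-> exists b, a = hmulR b b) /\
  [/\ (forall z : Chat U, hleR (hzeroR U) (hcabs z)),
      (forall z : Chat U, hcabs z = hzeroR U <-> z = hzeroC U),
      (forall z w : Chat U, hcabs (hmulC z w) = hmulR (hcabs z) (hcabs w)) &
      (forall z w : Chat U, hleR (hcabs (haddC z w)) (haddR (hcabs z) (hcabs w)))].
Proof.
split.
  exists (RH U), id; split => //; first by exists id.
  by split => // x y; exact: hleE.
split.
  move=> a; rewrite (hleE (U := U)); split => [/sq_exists [b ->]|[b ->]]; first by exists b.
  by change (0 <= (b : RH U) * b); rewrite -expr2 sqr_ge0.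
split.
- by move=> z; rewrite hcabsE; apply/hleE; exact: Nz_ge0.
- move=> z; rewrite hcabsE; split; last first.
    move=> ->; rewrite hzeroCE N_hmkC; last exact: modC0.
    by rewrite hzeroE; apply: hmkR_ext => phi; rewrite /nC /= expr0n /= addr0 sqrtr0.
  have hZ := repC_mod z.
  rewrite /Nz => /(hmkR0 (modC_norm hZ)) => hn.
  rewrite -(hmkC_rep z) hzeroCE hmkC_eq //; last exact: modC0.
  rewrite /eqvC negC_iff; apply: (negl_le _ hn); apply: uaeG => phi _.
  by rewrite subr0 ger0_norm ?nC_ge0.
- move=> z w; rewrite !hcabsE {1}/hmulC N_hmkC; last exact: modCM (repC_mod _) (repC_mod _).
  rewrite /Nz hmulE; try exact: modC_norm (repC_mod _).
  by apply: hmkR_ext => phi; exact: nC_mul.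
move=> z w; rewrite !hcabsE.
rewrite {1}/haddC N_hmkC; last exact: modCD (repC_mod _) (repC_mod _).
rewrite /Nz haddE; try exact: modC_norm (repC_mod _).
apply/hleE; apply: le_ae.
- exact: modC_norm (modCD (repC_mod _) (repC_mod _)).
- exact: modRD (modC_norm (repC_mod _)) (modC_norm (repC_mod _)).
by apply: uaeG => phi _; exact: nC_add.
Qed.
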